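(* If $C$ is a binary linear constant weight code of dimension at least $2$, then $|\mathrm{PAut}(C)|$ is a multiple of $6$.
   Context: A binary linear constant weight code of weight $w$ is an $\mathbb{F}_2$-subspace of $\mathbb{F}_2^n$ all of whose non-zero vectors have exactly $w$ coordinates equal to $1$. $S_n$ acts on $\mathbb{F}_2^n$ by permuting coordinates, $\sigma(v_1,\dots,v_n)=(v_{\sigma^{-1}(1)},\dots,v_{\sigma^{-1}(n)})$, and $\mathrm{PAut}(C)=\{\sigma\in S_n:\sigma(C)=C\}$. *)

(* Defs.v *)
From HB Require Import structures.
From mathcomp Require Import all_boot all_order all_algebra all_fingroup all_field.
Set Implicit Arguments. Unset Strict Implicit. Unset Printing Implicit Defensive.
Import GRing.Theory.
Local Open Scope ring_scope.

Definition word (n : nat) := 'rV['F_2]_n.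

Definition wt (n : nat) (v : word n) : nat := #|[set i : 'I_n | v 0 i != 0]|.

(* sigma(v)_i = v_{sigma^{-1}(i)}. *)
Definition perm_act (n : nat) (s : {perm 'I_n}) (v : word n) : word n :=
  col_perm s^-1 v.

Definition constant_weight (n : nat) (C : {vspace word n}) (w : nat) : Prop :=
  forall v, v \in C -> v != 0 -> wt v = w.

Definition PAut (n : nat) (C : {vspace word n}) : {set {perm 'I_n}} :=
  [set s : {perm 'I_n} | ((linfun (perm_act s)) @: C)%VS == C].

(* Main.v *)
Require Import Defs.
From HB Require Import structures.
From mathcomp Require Import all_boot all_order all_algebra all_fingroup all_solvable all_field.
Set Implicit Arguments. Unset Strict Implicit. Unset Printing Implicit Defensive.
Import GRing.Theory.
Local Open Scope ring_scope.

Definition S0 : 'M['F_2]_2 := \matrix_(i, j) (i != j)%:R.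
Definition B0 : 'M['F_2]_2 := \matrix_(i, j) ((i != 0) || (j != 0))%:R.

Lemma S0sq : S0 *m S0 = 1%:M.
Proof.
apply/matrixP => i j; rewrite !mxE !big_ord_recl !big_ord0 !mxE.
by case: i => [[|[|//]]] ?; case: j => [[|[|//]]] ?; apply/val_inj.
Qed.
Lemma B0cube : B0 *m B0 *m B0 = 1%:M.
Proof.
apply/matrixP => i j; rewrite !mxE !big_ord_recl !big_ord0 !mxE !big_ord_recl !big_ord0 !mxE.
by case: i => [[|[|//]]] ?; case: j => [[|[|//]]] ?; apply/val_inj.
Qed.

Definition ext k' (M : 'M['F_2]_2) : 'M['F_2]_(2 + k') := block_mx M 0 0 1%:M.
Lemma extM k' (M N : 'M['F_2]_2) : ext k' (M *m N) = ext k' M *m ext k' N.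
Proof. by rewrite /ext mulmx_block !mulmx0 !mul0mx !addr0 !add0r mul1mx. Qed.
Lemma ext1 k' : ext k' 1%:M = 1%:M.
Proof. by rewrite /ext -scalar_mx_block. Qed.
Definition vv k' : 'cV['F_2]_(2 + k') := col_mx (delta_mx 0 0) 0.
Lemma vv_neq0 k' : vv k' != 0.
Proof.
rewrite /vv col_mx_eq0 eqxx andbT; apply/negP => /eqP/matrixP/(_ 0 0).
by rewrite !mxE.
Qed.
Lemma ext_v k' (M : 'M['F_2]_2) : M 0 0 = 0 -> ext k' M *m vv k' != vv k'.
Proof.
move=> H; rewrite /ext /vv mul_block_col !mulmx0 !addr0.
apply/negP => /eqP/eq_col_mx [/matrixP/(_ 0 0) + _].
rewrite !mxE !big_ord_recl big_ord0 !mxE H /= mul0r mulr0 !addr0 => /eqP; by rewrite eq_sym oner_eq0.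
Qed.

Lemma exists_mx2 k : (2 <= k)%N -> exists A : 'M['F_2]_k,
  [/\ A *m A = 1%:M & exists v : 'cV_k, v != 0 /\ A *m v != v].
Proof.
case: k => [|[|k']] // _.
exists (ext k' S0); split; first by rewrite -extM S0sq ext1.
exists (vv k'); split; first exact: vv_neq0.
by apply: ext_v; rewrite mxE.
Qed.

Lemma exists_mx3 k : (2 <= k)%N -> exists A : 'M['F_2]_k,
  [/\ A *m A *m A = 1%:M & exists v : 'cV_k, v != 0 /\ A *m v != v].
Proof.
case: k => [|[|k']] // _.
exists (ext k' B0); split; first by rewrite -!extM B0cube ext1.
exists (vv k'); split; first exact: vv_neq0.
by apply: ext_v; rewrite mxE.
Qed.
Definition cls k n (G : 'M['F_2]_(k,n)) (v : 'cV_k) := [set j | col j G == v].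
Definition gmap k n (G : 'M['F_2]_(k,n)) (A : 'M_k) (i : 'I_n) : 'I_n :=
  if col i G == 0 then i
  else nth i (enum (cls G (A *m col i G))) (index i (enum (cls G (col i G)))).
Definition injm k (A : 'M['F_2]_k) := forall v : 'cV_k, A *m v = 0 -> v = 0.
Definition eqcls k n (G : 'M['F_2]_(k,n)) :=
  forall u v, u != 0 -> v != 0 -> #|cls G u| = #|cls G v|.

Lemma injm_neq0 k (A : 'M['F_2]_k) (v : 'cV_k) : injm A -> v != 0 -> A *m v != 0.
Proof. by move=> HA; apply: contra => /eqP /HA ->. Qed.

Lemma injmM k (A B : 'M['F_2]_k) : injm A -> injm B -> injm (B *m A).
Proof. by move=> HA HB v; rewrite -mulmxA => /HB /HA. Qed.

Lemma index_lt k n (G : 'M['F_2]_(k,n)) i :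
  (index i (enum (cls G (col i G))) < #|cls G (col i G)|)%N.
Proof. by rewrite cardE index_mem mem_enum inE. Qed.

Lemma gmap_spec k n (G : 'M['F_2]_(k,n)) A i : eqcls G -> injm A ->
  col (gmap G A i) G = A *m col i G /\
  (col i G != 0 -> index (gmap G A i) (enum (cls G (A *m col i G)))
                   = index i (enum (cls G (col i G)))).
Proof.
move=> Heq HA; rewrite /gmap; case: eqP => [->|/eqP Hv].
  by rewrite mulmx0.
have Hlt : (index i (enum (cls G (col i G))) < size (enum (cls G (A *m col i G))))%N.
  by rewrite -cardE (Heq _ (col i G)) ?index_lt ?injm_neq0.
split=> [|_]; last by rewrite index_uniq ?enum_uniq.
by have := mem_nth i Hlt; rewrite mem_enum inE => /eqP.
Qed.

Lemma gmap_comp k n (G : 'M['F_2]_(k,n)) A B i : eqcls G -> injm A -> injm B ->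
  gmap G B (gmap G A i) = gmap G (B *m A) i.
Proof.
move=> Heq HA HB.
have [Hc Hi] := gmap_spec i Heq HA.
case: (eqVneq (col i G) 0) => [Hv|Hv].
  by rewrite /gmap Hv mulmx0 !eqxx Hv eqxx.
rewrite {1}/gmap Hc (negPf (injm_neq0 HA Hv)) Hi // /gmap (negPf Hv) mulmxA.
apply: set_nth_default.
by rewrite -cardE (Heq _ (col i G)) ?index_lt // -mulmxA !injm_neq0.
Qed.

Lemma gmap1 k n (G : 'M['F_2]_(k,n)) i : gmap G 1%:M i = i.
Proof.
rewrite /gmap mul1mx; case: eqP => // _.
by rewrite nth_index // mem_enum inE.
Qed.
Lemma F2_cases (a : 'F_2) : a = 0 \/ a = 1.
Proof. case: a => [[|[|//]]] H. by left; apply/val_inj. by right; apply/val_inj. Qed.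
Lemma F2_11 : (1 + 1 : 'F_2) = 0.
Proof. by apply/val_inj. Qed.
Lemma F2_neq0 (a : 'F_2) : (a != 0) = (a == 1).
Proof. by case: (F2_cases a) => ->; rewrite ?eqxx ?oner_eq0 // eq_sym oner_eq0. Qed.

Definition dot k (x : 'rV['F_2]_k) (v : 'cV_k) := (x *m v) 0 0.
Lemma dotD k (x y : 'rV['F_2]_k) v : dot (x + y) v = dot x v + dot y v.
Proof. by rewrite /dot mulmxDl mxE. Qed.
Lemma dotN k (x : 'rV['F_2]_k) v : dot (- x) v = - dot x v.
Proof. by rewrite /dot mulNmx mxE. Qed.
Lemma dot0 k (x : 'rV['F_2]_k) : dot x 0 = 0.
Proof. by rewrite /dot mulmx0 mxE. Qed.
Lemma dot0l k (v : 'cV['F_2]_k) : dot 0 v = 0.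
Proof. by rewrite /dot mul0mx mxE. Qed.
Lemma dotE k (j : 'I_k) (v : 'cV['F_2]_k) : dot (delta_mx 0 j) v = v j 0.
Proof. by rewrite /dot -rowE mxE. Qed.
Lemma dotG k n (x : 'rV['F_2]_k) (G : 'M_(k,n)) i : (x *m G) 0 i = dot x (col i G).
Proof. by rewrite /dot colE mulmxA -colE [RHS]mxE. Qed.

Lemma exists_ent k (u : 'cV['F_2]_k) : u != 0 -> exists j, u j 0 = 1.
Proof.
case: (pickP (fun j => u j 0 != 0)) => [j Hj|H] Hu.
  by exists j; apply/eqP; rewrite -F2_neq0.
case/eqP: Hu; apply/matrixP => a b; rewrite (ord1 b) mxE.
by have := H a; move/negbFE/eqP.
Qed.

Lemma exists_diff k (u c : 'cV['F_2]_k) : c != u -> exists j, u j 0 != c j 0.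
Proof.
case: (pickP (fun j => u j 0 != c j 0)) => [j Hj|H] Hu; first by exists j.
case/eqP: Hu; apply/matrixP => a b; rewrite (ord1 b).
by have := H a; move/negbFE/eqP.
Qed.

Lemma sep k (u c : 'cV['F_2]_k) : c != 0 -> c != u ->
  exists y, dot y u = 0 /\ dot y c = 1.
Proof.
move=> Hc Hcu; have [l Hl] := exists_ent Hc; have [j Hj] := exists_diff Hcu.
case: (F2_cases (u j 0)) Hj => Huj; case: (F2_cases (c j 0)) => Hcj;
  rewrite Huj Hcj ?eqxx // => _.
  by exists (delta_mx 0 j); rewrite !dotE.
case: (F2_cases (u l 0)) => Hul.
  by exists (delta_mx 0 l); rewrite !dotE.
by exists (delta_mx 0 j + delta_mx 0 l); rewrite !dotD !dotE Huj Hul Hcj Hl F2_11 add0r.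
Qed.

Lemma card_sum (T : finType) (P : pred T) : #|[set x | P x]| = (\sum_x (P x : nat))%N.
Proof.
rewrite -sum1_card big_mkcond /=; apply: eq_bigr => x _; rewrite inE; by case: (P x).
Qed.

Definition Pset k (u : 'cV['F_2]_k) := [set x : 'rV_k | dot x u == 1].

Lemma half k (u c : 'cV['F_2]_k) : c != 0 -> c != u ->
  (2 * #|[set x : 'rV_k | (dot x u == 1%R) && (dot x c != 0%R)]| = #|Pset u|)%N.
Proof.
move=> Hc Hcu; have [y [Hyu Hyc]] := sep Hc Hcu.
set S1 := [set x | _ && _].
have E1 : Pset u :&: [set x | dot x c != 0] = S1 by apply/setP => x; rewrite !inE.
have E0 : Pset u :\: [set x | dot x c != 0] = (fun x => x + y) @: S1.
  apply/setP => z; rewrite !inE; apply/idP/imsetP.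
    case/andP => Hz Hzu; exists (z - y); last by rewrite subrK.
    rewrite inE !dotD !dotN Hyu Hyc oppr0 addr0 Hzu /=.
    by move: Hz; rewrite negbK => /eqP ->; rewrite add0r oppr_eq0 oner_eq0.
  case=> x; rewrite inE => /andP [Hxu Hxc] ->.
  rewrite !dotD Hyu Hyc addr0 Hxu andbT negbK.
  by move: Hxc; rewrite F2_neq0 => /eqP ->; rewrite F2_11.
rewrite -(cardsID [set x | dot x c != 0] (Pset u)) E1 E0 card_imset; last exact: addIr.
by rewrite mul2n addnn.
Qed.


Lemma cnt_eq k (u c : 'cV['F_2]_k) : u != 0 ->
  (2 * #|[set x : 'rV_k | (dot x u == 1%R) && (dot x c != 0%R)]|
     = #|Pset u| * ((c == u) + (c != 0%R)))%N.
Proof.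
move=> Hu; case: (eqVneq c u) => [->|Hcu].
  rewrite Hu /= mulnC; congr (_ * _)%N.
  by apply: eq_card => x; rewrite !inE F2_neq0 andbb.
case: (eqVneq c 0) => [->|Hc].
  rewrite muln0 (_ : [set _ | _] = set0) ?cards0 //.
  by apply/setP => x; rewrite !inE dot0 eqxx andbF.
by rewrite half // muln1.
Qed.

Lemma bonisoli k n (G : 'M['F_2]_(k,n)) w :
  (forall x : 'rV_k, x != 0 -> #|[set i | (x *m G) 0 i != 0]| = w) ->
  forall u : 'cV_k, u != 0 -> (#|cls G u| + #|[set i | col i G != 0%R]| = 2 * w)%N.
Proof.
move=> Hw u Hu.
have Ppos : (0 < #|Pset u|)%N.
  have [j Hj] := exists_ent Hu.
  by apply/card_gt0P; exists (delta_mx 0 j); rewrite inE dotE Hj.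
apply/eqP; rewrite -(eqn_pmul2l Ppos); apply/eqP.
have S : (\sum_(x in Pset u) #|[set i | (x *m G) 0%R i != 0%R]| = #|Pset u| * w)%N.
  rewrite (eq_bigr (fun _ => w)) ?sum_nat_const // => x; rewrite inE => Hx.
  by apply: Hw; apply: contraTneq Hx => ->; rewrite dot0l eq_sym oner_eq0.
have S2 : (\sum_(x in Pset u) #|[set i | (x *m G) 0%R i != 0%R]| =
   \sum_i #|[set x : 'rV_k | (dot x u == 1%R) && (dot x (col i G) != 0%R)]|)%N.
  under eq_bigr do rewrite card_sum.
  rewrite exchange_big /=; apply: eq_bigr => i _.
  rewrite card_sum [LHS]big_mkcond /=; apply: eq_bigr => x _.
  by rewrite inE dotG; case: (dot x u == 1).
rewrite mulnCA -S S2 big_distrr /=.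
under eq_bigr do rewrite cnt_eq //.
rewrite -big_distrr /= big_split /= -!card_sum.
by congr (_ * (_ + _))%N; apply: eq_card => i; rewrite !inE.
Qed.
HB.instance Definition _ n (s : {perm 'I_n}) :=
  GRing.Linear.copy (perm_act s) (col_perm s^-1 : word n -> word n).
Lemma perm_actE n s (v : word n) : linfun (perm_act s) v = perm_act s v.
Proof. by rewrite lfunE. Qed.

Lemma perm_actM n (s t : {perm 'I_n}) (v : word n) :
  perm_act (s * t) v = perm_act t (perm_act s v).
Proof. by apply/matrixP => a b; rewrite !mxE invMg permM. Qed.
Lemma perm_act1 n (v : word n) : perm_act 1 v = v.
Proof. by apply/matrixP => a b; rewrite !mxE invg1 perm1. Qed.
Lemma perm_actK n (s : {perm 'I_n}) : cancel (perm_act s) (perm_act s^-1).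
Proof. by move=> v; rewrite -perm_actM mulgV perm_act1. Qed.

Lemma PAutP n (C : {vspace word n}) s :
  (forall v, v \in C -> perm_act s v \in C) -> s \in PAut C.
Proof.
move=> H; rewrite inE eqEdim; apply/andP; split.
  by apply/subvP => _ /memv_imgP [v Hv ->]; rewrite perm_actE H.
rewrite limg_dim_eq //; apply/eqP; rewrite -subv0.
have /eqP -> : lker (linfun (perm_act s)) == 0%VS.
  by apply/lker0P => u v; rewrite !perm_actE => /(can_inj (perm_actK s)).
by rewrite capv0.
Qed.

Lemma PAut_mem n (C : {vspace word n}) s v :
  s \in PAut C -> v \in C -> perm_act s v \in C.
Proof.
rewrite inE => /eqP H Hv; rewrite -perm_actE -H; exact: memv_img.
Qed.

Lemma PAut_group n (C : {vspace word n}) : group_set (PAut C).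
Proof.
apply/group_setP; split.
  by apply: PAutP => v; rewrite perm_act1.
move=> s t Hs Ht; apply: PAutP => v Hv.
by rewrite perm_actM; apply: PAut_mem => //; apply: PAut_mem.
Qed.

Definition genm n (C : {vspace word n}) : 'M['F_2]_(\dim C, n) :=
  \matrix_(r < \dim C) (vbasis C)`_r.

Lemma genm_mem n (C : {vspace word n}) (x : 'rV_(\dim C)) : x *m genm C \in C.
Proof.
rewrite mulmx_sum_row; apply: memv_suml => r _; apply: memvZ.
by rewrite rowK; apply: vbasis_mem; apply: mem_nth; rewrite size_tuple.
Qed.

Lemma genm_inj n (C : {vspace word n}) (x : 'rV_(\dim C)) : x *m genm C = 0 -> x = 0.
Proof.
rewrite mulmx_sum_row => H.
have H0 := (freeP (basis_free (vbasisP C))) (fun r => x 0 r).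
apply/matrixP => a b; rewrite (ord1 a) mxE; apply: H0.
by rewrite -[RHS]H; apply: eq_bigr => r _; rewrite rowK.
Qed.

Lemma genm_surj n (C : {vspace word n}) c : c \in C -> exists x, c = x *m genm C.
Proof.
move/coord_vbasis => ->; exists (\row_r coord (vbasis C) r c).
by rewrite mulmx_sum_row; apply: eq_bigr => r _; rewrite rowK mxE.
Qed.

Lemma injm_of k (A D : 'M['F_2]_k) : D *m A = 1%:M -> injm A.
Proof. by move=> HDA v Hv; rewrite -(mul1mx v) -HDA -mulmxA Hv mulmx0. Qed.

Lemma dvd_PAut n (C : {vspace word n}) (A D : 'M['F_2]_(\dim C)) (p : nat) :
  prime p -> eqcls (genm C) -> D *m A = 1%:M -> A *m D = 1%:M ->
  (forall i, iter p (gmap (genm C) A) i = i) ->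
  (exists i, gmap (genm C) A i != i) -> (p %| #|PAut C|)%N.
Proof.
move=> Hp Heq HDA HAD Hit [i0 Hi0].
have iA := injm_of HDA; have iD := injm_of HAD.
have Hc : cancel (gmap (genm C) A) (gmap (genm C) D).
  by move=> i; rewrite gmap_comp // HDA gmap1.
have Hc' : cancel (gmap (genm C) D) (gmap (genm C) A).
  by move=> i; rewrite gmap_comp // HAD gmap1.
pose s := perm (can_inj Hc).
have sE : forall i, s i = gmap (genm C) A i by move=> i; rewrite permE.
have sVE : forall i, (s^-1)%g i = gmap (genm C) D i.
  by move=> i; apply: (@perm_inj _ s); rewrite permKV sE Hc'.
have sP : s \in PAut C.
  apply: PAutP => v /genm_surj [x ->].
  rewrite (_ : perm_act s _ = (x *m D) *m genm C); first exact: genm_mem.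
  apply/matrixP => a b; rewrite (ord1 a) [LHS]mxE sVE !dotG.
  have [-> _] := gmap_spec b Heq iD.
  by rewrite /dot mulmxA.
have sp : (s ^+ p = 1)%g.
  apply/permP => i; rewrite permX perm1 -[RHS](Hit i).
  by apply: eq_iter => j; rewrite sE.
have s1 : (s != 1)%g.
  by apply: contra Hi0 => /eqP s1; rewrite -sE s1 perm1.
have Hord : #[s]%g = p.
  apply/(prime_nt_dvdP Hp); first by rewrite order_eq1.
  by rewrite order_dvdn sp.
rewrite -Hord; exact: (order_dvdG (G := Group (PAut_group C))).
Qed.

Lemma exists_moved n (C : {vspace word n}) (A : 'M['F_2]_(\dim C)) (v : 'cV_(\dim C)) :
  eqcls (genm C) -> injm A -> (exists i, col i (genm C) != 0) ->
  v != 0 -> A *m v != v -> exists i, gmap (genm C) A i != i.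
Proof.
move=> Heq iA [i Hi] Hv HAv.
have : (0 < #|cls (genm C) v|)%N.
  rewrite (Heq _ (col i (genm C))) //; apply/card_gt0P; exists i; by rewrite inE.
case/card_gt0P => j; rewrite inE => /eqP Hj; exists j.
apply: contra HAv => /eqP Hg.
have [Hc _] := gmap_spec j Heq iA.
by rewrite Hg Hj in Hc; rewrite -Hc.
Qed.

Theorem corollary5p3 (n : nat) (C : {vspace word n}) (w : nat) :
  constant_weight C w -> (2 <= \dim C)%N -> (6 %| #|PAut C|)%N.
Proof.
move=> Hcw Hdim.
have Hw : forall x : 'rV_(\dim C), x != 0 ->
    #|[set i | (x *m genm C) 0 i != 0]| = w.
  move=> x Hx; apply: Hcw; first exact: genm_mem.
  by apply: contraNneq Hx => /genm_inj ->; rewrite eqxx.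
have Heq : eqcls (genm C).
  move=> u v Hu Hv; have := bonisoli Hw Hu; have := bonisoli Hw Hv => H1 H2.
  by apply/eqP; rewrite -(eqn_add2r #|[set i | col i (genm C) != 0]|) H1 H2.
have Hnz : exists i, col i (genm C) != 0.
  case: (pickP (fun i => col i (genm C) != 0)) => [i Hi|H]; first by exists i.
  exfalso.
  have G0 : genm C = 0.
    apply/matrixP => a b; have := H b; move/negbFE/eqP/matrixP/(_ a 0).
    by rewrite !mxE.
  have Hk : (0 < \dim C)%N by apply: leq_trans Hdim.
  pose i0 := Ordinal Hk.
  have := @genm_inj n C (delta_mx 0 i0); rewrite G0 mulmx0 => /(_ erefl).
  by move/matrixP/(_ 0 i0); rewrite !mxE !eqxx /= => /eqP; rewrite oner_eq0.
have H2 : (2 %| #|PAut C|)%N.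
  have [A [HAA [v [Hv HAv]]]] := exists_mx2 Hdim.
  have iA := injm_of HAA.
  apply: (@dvd_PAut n C A A 2) => //.
    by move=> i /=; rewrite gmap_comp // HAA gmap1.
  exact: exists_moved Hv HAv.
have H3 : (3 %| #|PAut C|)%N.
  have [A [HAAA [v [Hv HAv]]]] := exists_mx3 Hdim.
  have HDA : (A *m A) *m A = 1%:M by [].
  have iA := injm_of HDA.
  apply: (@dvd_PAut n C A (A *m A) 3) => //.
    by rewrite mulmxA.
    by move=> i /=; rewrite !gmap_comp // ?HDA ?gmap1 //; apply: injmM.
  exact: exists_moved Hv HAv.
by rewrite (@Gauss_dvd 2 3) ?H2 ?H3.
Qed.
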